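(* Let $S$ be an additively reduced semidomain and $G$ a torsion-free abelian group. If a nonzero $f=\sum_{i=0}^\infty s_ix^{g_i}\in S[\![G]\!]$ satisfies $g_1-g_0<g_{i+1}-g_i$ for every $i\in\mathbb{N}$ (i.e. every $i\ge1$), then $f$ is monolithic.
   Context: A semidomain is a subsemiring (containing $0$ and $1$) of an integral domain. $S$ is additively reduced if $0$ is the only invertible element of $(S,+)$. $G$ carries a fixed total order compatible with addition. $S[\![G]\!]=\{\sum_{i=0}^\infty s_ix^{g_i} : s_i\in S,\ g_i\in G,\ g_i<g_{i+1}\}$ with operations defined as for polynomials; elements are written so that $s_i=0$ implies $s_{i+1}=0$; $\operatorname{supp}(f)=\{g_i: s_i\neq0\}$. A nonzero $f$ is monolithic if $f=pq$ with $p,q\in S[\![G]\!]$ implies one of $p,q$ is a monomial $sx^g$. *)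

(* Defs.v *)
From HB Require Import structures.
From mathcomp Require Import all_boot all_order all_algebra.
Set Implicit Arguments. Unset Strict Implicit. Unset Printing Implicit Defensive.
Import Order.TTheory GRing.Theory Num.Theory.
Local Open Scope ring_scope.

Definition semidomain (R : idomainType) (S : pred R) : Prop :=
  [/\ 0 \in S, 1 \in S,
      (forall x y, x \in S -> y \in S -> x + y \in S) &
      (forall x y, x \in S -> y \in S -> x * y \in S)].

Definition additively_reduced (R : idomainType) (S : pred R) : Prop :=
  forall x, x \in S -> (exists2 y, y \in S & x + y = 0) -> x = 0.

Definition torsion_free (G : zmodType) : Prop :=
  forall (n : nat) (g : G), g *+ n.+1 = 0 -> g = 0.

Definition ordered_group (G : zmodType) (lt : rel G) : Prop :=
  [/\ (forall a, ~~ lt a a),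
      (forall a b c, lt a b -> lt b c -> lt a c),
      (forall a b, a != b -> lt a b || lt b a) &
      (forall a b c, lt a b -> lt (a + c) (b + c))].

(* Elements of S[[G]] are represented by their coefficient function f : G -> R.
   [represents S lt f s g] says f = \sum_i s_i x^{g_i} with s_i \in S,
   g_i < g_{i+1}, and s_i = 0 -> s_{i+1} = 0. *)
Definition represents (R : idomainType) (S : pred R) (G : zmodType) (lt : rel G)
  (f : G -> R) (s : nat -> R) (g : nat -> G) : Prop :=
  [/\ (forall i, s i \in S),
      (forall i, lt (g i) (g i.+1)),
      (forall i, s i = 0 -> s i.+1 = 0),
      (forall i, f (g i) = s i) &
      (forall h, (forall i, g i != h) -> f h = 0)].

Definition in_series (R : idomainType) (S : pred R) (G : zmodType) (lt : rel G)
  (f : G -> R) : Prop :=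
  exists s g, represents S lt f s g.

(* f = p * q, with product defined as for polynomials: the coefficient of
   x^h in p q is the (finite) sum of p_a q_b over a + b = h. *)
Definition is_product (R : idomainType) (G : zmodType) (p q f : G -> R) : Prop :=
  forall h : G, exists l : seq (G * G),
    [/\ uniq l,
        (forall a b, (a, b) \in l <-> [/\ p a != 0, q b != 0 & a + b = h]) &
        f h = \sum_(ab <- l) p ab.1 * q ab.2].

Definition monomial (R : idomainType) (G : zmodType) (p : G -> R) : Prop :=
  exists (c : R) (m : G), forall h, p h = if h == m then c else 0.

Definition monolithic (R : idomainType) (S : pred R) (G : zmodType) (lt : rel G)
  (f : G -> R) : Prop :=
  (exists h, f h != 0) /\
  forall p q : G -> R, in_series S lt p -> in_series S lt q ->
    is_product p q f -> monomial p \/ monomial q.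

(* Main.v *)
Require Import Defs.
From mathcomp Require Import all_boot all_order all_algebra.
From Stdlib Require Import Classical.
Import GRing.Theory.
Local Open Scope ring_scope.
Set Implicit Arguments. Unset Strict Implicit.

Section Ord.
Variables (G : zmodType) (lt : rel G).
Hypothesis Hlt : ordered_group lt.

Lemma lt_irr a : ~~ lt a a. Proof. by case: Hlt. Qed.
Lemma lt_tr a b c : lt a b -> lt b c -> lt a c. Proof. by case: Hlt => _ H _ _; apply: H. Qed.
Lemma lt_addr a b c : lt a b -> lt (a + c) (b + c). Proof. by case: Hlt => _ _ _ H; apply: H. Qed.
Lemma lt_addl a b c : lt a b -> lt (c + a) (c + b).
Proof. by rewrite ![c + _]addrC; apply: lt_addr. Qed.
Lemma lt_asym a b : lt a b -> lt b a -> False.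
Proof. by move=> h1 h2; have := lt_tr h1 h2; rewrite (negbTE (lt_irr a)). Qed.
Definition leG a b := a = b \/ lt a b.
Lemma lt_not_le a b : lt a b -> leG b a -> False.
Proof. move=> h [e|h']; last exact: lt_asym h h'. by move: h; rewrite e (negbTE (lt_irr a)). Qed.
Lemma le_lt_tr a b c : leG a b -> lt b c -> lt a c.
Proof. by case=> [->|h] // h'; apply: lt_tr h h'. Qed.
Lemma le_tr a b c : leG a b -> leG b c -> leG a c.
Proof. case=> [->|h] // [<-|h']; [by right| right; exact: lt_tr h h']. Qed.
Lemma le_addr a b c : leG a b -> leG (a + c) (b + c).
Proof. by case=> [->|h]; [left|right; apply: lt_addr]. Qed.
Lemma le_add a b c d : leG a b -> leG c d -> leG (a + c) (b + d).
Proof.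
move=> h1 h2; apply: (@le_tr _ (b + c)); first exact: le_addr.
by rewrite ![b + _]addrC; apply: le_addr.
Qed.
Lemma lt_sub a b : lt a b -> lt 0 (b - a).
Proof. by move/(lt_addr (- a)); rewrite subrr. Qed.

Variables (g : nat -> G).
Hypothesis Hg : forall i, lt (g i) (g i.+1).
Lemma g_mono i j : (i < j)%N -> lt (g i) (g j).
Proof.
elim: j => // j IH; rewrite ltnS leq_eqVlt => /orP [/eqP ->|/IH h]; first exact: Hg.
exact: lt_tr h (Hg j).
Qed.
Lemma g_le i j : (i <= j)%N -> leG (g i) (g j).
Proof. by rewrite leq_eqVlt => /orP [/eqP ->|/g_mono h]; [left|right]. Qed.
Lemma g_mono_inv i j : lt (g i) (g j) -> (i < j)%N.
Proof.
move=> h; case: (ltnP i j) => // hji; exfalso; exact: lt_not_le h (g_le hji).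
Qed.
End Ord.

Section Ser.
Variables (R : idomainType) (S : pred R) (G : zmodType) (lt : rel G).
Hypothesis HS : semidomain S.
Hypothesis Hred : additively_reduced S.
Hypothesis Hlt : ordered_group lt.

Lemma s_down (s : nat -> R) : (forall i, s i = 0 -> s i.+1 = 0) ->
  forall i j, (i <= j)%N -> s j != 0 -> s i != 0.
Proof.
move=> H i j hij; apply: contraNN => /eqP h0; apply/eqP.
rewrite -(subnKC hij); elim: (j - i)%N => [|k IH]; first by rewrite addn0.
by rewrite addnS; apply: H.
Qed.


Lemma supp f s g : represents S lt f s g -> forall h, f h != 0 ->
  exists i, g i = h /\ s i != 0.
Proof.
case=> _ _ _ Hv Hz h Hh; apply: NNPP => hn.
have : f h = 0.
  apply: Hz => i; apply/eqP => e; apply: hn; exists i; split => //.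
  by rewrite -Hv e.
by move/eqP: Hh.
Qed.

Lemma valS f s g : represents S lt f s g -> forall h, f h \in S.
Proof.
move=> Hr h; case: (eqVneq (f h) 0) => [->|nz]; first by case: HS.
have [i [<- _]] := supp Hr nz; case: Hr => HSi _ _ Hv _; rewrite Hv; exact: HSi.
Qed.

Lemma nonmono p sp gp : represents S lt p sp gp -> ~ monomial p ->
  sp 0%N != 0 /\ sp 1%N != 0.
Proof.
move=> Hr nm.
suff h1 : sp 1%N != 0.
  by split => //; apply: (s_down _ (i:=0) (j:=1)) => //; case: Hr.
apply/eqP => s1; apply: nm; exists (sp 0%N), (gp 0%N) => h.
case: eqP => [->|ne]; first by case: Hr.
case: (eqVneq (p h) 0) => // nz.
have [i [e si]] := supp Hr nz.
case: i e si => [e|i e si]; first by case: ne.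
exfalso; move: si; apply/negP; rewrite negbK.
have := s_down (s := sp) _ (i := 1) (j := i.+1); case: Hr => _ _ Hd _ _.
by move=> /(_ Hd isT); rewrite s1 eqxx; case: (sp i.+1 == 0) => // /(_ isT).
Qed.

Lemma supp_min p sp gp : represents S lt p sp gp -> forall a, p a != 0 ->
  leG lt (gp 0%N) a /\ (a = gp 0%N \/ leG lt (gp 1%N) a).
Proof.
move=> Hr a nz; have [i [<- _]] := supp Hr nz.
have Hg : forall i, lt (gp i) (gp i.+1) by case: Hr.
case: i => [|i]; first by split; left.
split; first exact: g_le.
by right; apply: g_le.
Qed.

Lemma sumS (T : Type) (F : T -> R) l : (forall y, F y \in S) -> \sum_(y <- l) F y \in S.
Proof.
case: HS => S0 _ Sadd _ HF.
elim: l => [|y l IH]; rewrite ?big_nil ?big_cons //; exact: Sadd.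
Qed.

Lemma sum_nz (T : eqType) (F : T -> R) (l : seq T) x : (forall y, F y \in S) ->
  x \in l -> F x != 0 -> \sum_(y <- l) F y != 0.
Proof.
move=> HF; elim: l => // y l IH; rewrite in_cons big_cons => /orP [/eqP <- | xl] Fx.
  apply/eqP => e; move/eqP: Fx; apply; apply: Hred (HF x) _.
  by exists (\sum_(y <- l) F y) => //; apply: sumS.
apply/eqP => e; apply: (negP (IH xl Fx)); apply/eqP.
apply: Hred (@sumS _ _ l HF) _; exists (F y); [exact: HF | by rewrite addrC].
Qed.

Variables (p q f : G -> R).
Hypotheses (HpS : forall a, p a \in S) (HqS : forall a, q a \in S).
Hypothesis Hprod : is_product p q f.

Lemma prod_nz a b : p a != 0 -> q b != 0 -> f (a + b) != 0.
Proof.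
move=> pa qb; have [l [_ Hl ->]] := Hprod (a + b).
have hin : (a, b) \in l by apply/Hl.
apply: (sum_nz (F := fun ab => p ab.1 * q ab.2)) hin _ => /=.
  by move=> y; case: HS => _ _ _ Sm; apply: Sm.
by rewrite mulf_neq0.
Qed.

Lemma prod_supp h : f h != 0 -> exists a b, [/\ p a != 0, q b != 0 & a + b = h].
Proof.
have [l [_ Hl e]] := Hprod h; case: l Hl e => [|[a b] l] Hl e.
  by rewrite e big_nil eqxx.
move=> _; exists a, b; apply/Hl; exact: mem_head.
Qed.
End Ser.

Unset Implicit Arguments.
Theorem lemma4p2 (R : idomainType) (S : pred R) (G : zmodType) (lt : rel G)
  (HS : semidomain S) (Hred : additively_reduced S)
  (HG : torsion_free G) (Hlt : ordered_group lt)
  (f : G -> R) (s : nat -> R) (g : nat -> G)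
  (Hf : represents S lt f s g) (Hnz : exists h, f h != 0)
  (Hgap : forall i : nat, (1 <= i)%N -> lt (g 1%N - g 0%N) (g i.+1 - g i)) :
  monolithic S lt f.
Proof.
split => // p q [sp [gp Hp]] [sq [gq Hq]] Hprod.
case: (classic (monomial p)) => [|np]; first by left.
case: (classic (monomial q)) => [|nq]; first by right.
exfalso.
have [p0 p1] := nonmono Hp np; have [q0 q1] := nonmono Hq nq.
have Hpv : forall i, p (gp i) = sp i by case: Hp.
have Hqv : forall i, q (gq i) = sq i by case: Hq.
have Hfv : forall i, f (g i) = s i by case: Hf.
have Hgi : forall i, lt (g i) (g i.+1) by case: Hf.
have Hsd : forall i, s i = 0 -> s i.+1 = 0 by case: Hf.
have pa0 : p (gp 0%N) != 0 by rewrite Hpv.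
have pa1 : p (gp 1%N) != 0 by rewrite Hpv.
have qb0 : q (gq 0%N) != 0 by rewrite Hqv.
have qb1 : q (gq 1%N) != 0 by rewrite Hqv.
have HpS := valS HS Hp; have HqS := valS HS Hq.
have pnz := prod_nz HS Hred HpS HqS Hprod.
have psupp := prod_supp Hprod.
have fsupp := supp Hf.
have la : lt (gp 0%N) (gp 1%N) by case: Hp.
have lb : lt (gq 0%N) (gq 1%N) by case: Hq.
set a0 := gp 0%N in pa0 la *; set a1 := gp 1%N in pa1 la *.
set b0 := gq 0%N in qb0 lb *; set b1 := gq 1%N in qb1 lb *.
have Hmin : forall h, f h != 0 -> leG lt (a0 + b0) h /\
    (h = a0 + b0 \/ leG lt (a1 + b0) h \/ leG lt (a0 + b1) h).
  move=> h /psupp [a [b [pa qb <-]]].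
  have [la0 [ea|la1]] := supp_min Hlt Hp pa; have [lb0 [eb|lb1]] := supp_min Hlt Hq qb.
  - by split; [exact: (le_add Hlt la0 lb0)|left; rewrite ea eb].
  - by split; [exact: (le_add Hlt la0 lb0)|right; right; rewrite ea; exact: (le_add Hlt (or_introl (erefl _)) lb1)].
  - by split; [exact: (le_add Hlt la0 lb0)|right; left; exact: (le_add Hlt la1 lb0)].
  - by split; [exact: (le_add Hlt la0 lb0)|right; left; exact: (le_add Hlt la1 lb0)].
have Hg0 : g 0%N = a0 + b0.
  have [i [ei si]] := fsupp _ (pnz _ _ pa0 qb0).
  have s0 : s 0%N != 0 by apply: (s_down Hsd (i := 0) (j := i)).
  have f0 : f (g 0%N) != 0 by rewrite Hfv.
  have [hle _] := Hmin (g 0%N) f0.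
  case: i ei si => [|i] ei si; first by [].
  exfalso; apply: (lt_not_le Hlt (g_mono Hlt Hgi (ltn0Sn i))); rewrite ei; exact: hle.
have lt0 : forall u, lt (a0 + b0) u -> exists j, [/\ (1 <= j)%N, g j = u & s j != 0] \/ f u = 0.
  move=> u hu; case: (eqVneq (f u) 0) => [e|nz]; first by exists 0%N; right.
  have [j [ej sj]] := fsupp _ nz; exists j; left; split => //.
  case: j ej sj => // ej; exfalso; move: hu; rewrite -ej Hg0.
  by rewrite (negbTE (lt_irr Hlt _)).
have K : forall u d, f u != 0 -> f (u + d) != 0 -> lt (a0 + b0) u -> lt 0 d ->
    leG lt d (g 1%N - g 0%N) -> False.
  move=> u d fu fud hu hd hdg.
  have [j [[j1 ej sj]|] ] := lt0 u hu; last by move/eqP: fu.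
  have [k [ek _]] := fsupp _ fud.
  have ujd : lt u (u + d) by have := lt_addl Hlt u hd; rewrite addr0.
  have hjk : (j < k)%N by apply: (g_mono_inv Hlt Hgi); rewrite ej ek.
  have h1 := le_lt_tr Hlt hdg (Hgap j j1).
  have h2 : lt (g k) (g j.+1).
    by rewrite ek -ej; have := lt_addl Hlt (g j) h1; rewrite [g j + (_ - _)]addrC subrK.
  have h3 := g_le Hlt Hgi hjk. exact: (lt_not_le Hlt h2 h3).
have Hf1 : f (a1 + b0) != 0 by apply: pnz.
have s1 : s 1%N != 0.
  have [j [[j1 ej sj]|e]] := lt0 _ (lt_addr Hlt b0 la); last by move/eqP: Hf1.
  exact: s_down Hsd _ _ j1 sj.
have g1nz : f (g 1%N) != 0 by rewrite Hfv.
have [_ [e1|[c1|c2]]] := Hmin _ g1nz.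
- by have := Hgi 0%N; rewrite Hg0 -e1 (negbTE (lt_irr Hlt _)).
- apply: (K (a0 + b1) (a1 - a0)).
  + exact: pnz.
  + by rewrite addrC addrA subrK; apply: pnz.
  + exact: (lt_addl Hlt a0 lb).
  + exact: (lt_sub Hlt la).
  + have := le_addr Hlt (- g 0%N) c1; rewrite Hg0.
    by rewrite opprD addrACA subrr addr0.
- apply: (K (a1 + b0) (b1 - b0)).
  + exact: pnz.
  + by rewrite -addrA [b0 + _]addrC subrK; apply: pnz.
  + exact: (lt_addr Hlt b0 la).
  + exact: (lt_sub Hlt lb).
  + have := le_addr Hlt (- g 0%N) c2; rewrite Hg0.
    by rewrite opprD addrACA subrr addrC addr0.
Qed.
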